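(* Let $G$ be a bipartite instance, let $(u,v)\in E$ with $u$'s deadline earlier than $v$'s, and fix the ranks $\mathbf y_{-uv}$ of all vertices other than $u,v$. Let $\tau$ be the marginal rank of $u$ with respect to $\mathbf y_{-uv}$ in the graph $G-\{v\}$, and $\gamma$ the marginal rank of $v$ with respect to $\mathbf y_{-uv}$ in the graph $G-\{u\}$. Then, with $y_u,y_v$ independent and uniform on $[0,1)$, $$\mathbb{E}_{y_u,y_v}\big[\alpha_u\mathbf 1(y_u<\tau)+\alpha_v\mathbf 1(y_v<\gamma)\big]=\int_0^\tau g(y)\,dy+\int_0^\gamma g(y)\,dy.$$
   Context: Fully online matching model on a graph $G=(V,E)$: each step is the arrival or the deadline of a vertex; at arrival, edges to previously arrived vertices are revealed; every neighbor of $v$ arrives before $v$'s deadline; at a vertex's deadline, if unmatched, it is irrevocably matched to an unmatched neighbor or left unmatched. Ranking: each vertex $w$ has a rank $y_w\in[0,1)$ (drawn uniformly at random on arrival); at the deadline of an unmatched vertex $w$, if it has unmatched neighbors it is matched to the unmatched neighbor of minimum rank. $M(\mathbf y)$ is the resulting matching for rank vector $\mathbf y$. If an edge $(a,b)$ is matched at $a$'s deadline, $a$ is called active and $b$ passive. Fix a non-decreasing $g:[0,1]\to[0,1]$ with $g(1)=1$. Dual variables: if $(a,b)$ is matched with $a$ active and $b$ passive, set $\alpha_a=1-g(y_b)$ and $\alpha_b=g(y_b)$; unmatched vertices have $\alpha=0$. Marginal rank: for a vertex $w$ in a graph $H$ and fixed ranks of all other vertices of $H$, the marginal rank of $w$ is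 the largest value $\theta\in[0,1]$ such that $w$ is passive in the matching produced by Ranking on $H$ when $y_w=\theta^-$ (rank infinitesimally below $\theta$); it equals $0$ if no such value exists. *)

(* Defs.v *)
From mathcomp Require Import all_boot.
From Stdlib Require Import Reals.

Set Implicit Arguments.
Unset Strict Implicit.
Unset Printing Implicit Defensive.

Section Model.
Variable V : finType.

(* A fully online bipartite instance: adjacency relation, arrival and
   deadline time stamps (all 2|V| time stamps distinct). *)
Definition valid_instance (adj : rel V) (arr dl : V -> nat) : Prop :=
  (forall a b, adj a b = adj b a) /\
  (forall a, ~~ adj a a) /\
  injective arr /\ injective dl /\
  (forall a b, arr a <> dl b) /\
  (forall a, (arr a < dl a)%N) /\
  (forall a b, adj a b -> (arr a < dl b)%N).

Definition bipartite (adj : rel V) : Prop :=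
  exists side : V -> bool, forall a b, adj a b -> side a != side b.

Definition deadline_order (dl : V -> nat) : seq V :=
  sort (fun a b => (dl a <= dl b)%N) (enum V).

(* matching as a list of (active, passive) pairs *)
Definition matched (M : seq (V * V)) (x : V) : bool :=
  has (fun p => (p.1 == x) || (p.2 == x)) M.

(* unmatched neighbour of minimum rank; ties (a null event) are broken
   in favour of the vertex occurring first in enum V *)
Definition minpick (y : V -> R) (l : seq V) : option V :=
  foldr (fun x acc => match acc with
                      | None => Some x
                      | Some z => if Rle_dec (y x) (y z) then Some x else Some z
                      end) None l.

(* Ranking run on the induced subgraph G[S] *)
Definition ranking_step (adj : rel V) (S : {set V}) (y : V -> R)
    (M : seq (V * V)) (w : V) : seq (V * V) :=
  if (w \in S) && ~~ matched M w then
    match minpick y [seq x <- enum V | (x \in S) && adj w x && ~~ matched M x] with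
    | Some x => rcons M (w, x)
    | None => M
    end
  else M.

Definition ranking (adj : rel V) (dl : V -> nat) (S : {set V}) (y : V -> R)
  : seq (V * V) :=
  foldl (ranking_step adj S y) [::] (deadline_order dl).

Definition passive adj dl (S : {set V}) (y : V -> R) (w : V) : bool :=
  has (fun p => p.2 == w) (ranking adj dl S y).

Definition upd (y : V -> R) (w : V) (t : R) : V -> R :=
  fun x => if x == w then t else y x.

(* w is passive in Ranking on G[S] when y_w = theta^- *)
Definition passive_below adj dl (S : {set V}) (y : V -> R) (w : V) (theta : R)
  : Prop :=
  exists eps : R, (0 < eps)%R /\
    forall t : R, (theta - eps < t)%R -> (t < theta)%R -> passive adj dl S (upd y w t) w.

Definition is_marginal_rank adj dl (S : {set V}) (y : V -> R) (w : V) (theta : R)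
  : Prop :=
  ((0 < theta <= 1)%R /\ passive_below adj dl S y w theta /\
     forall th, (0 < th <= 1)%R -> passive_below adj dl S y w th -> (th <= theta)%R)
  \/
  (theta = 0%R /\
     forall th, (0 < th <= 1)%R -> ~ passive_below adj dl S y w th).

Definition alpha adj dl (g : R -> R) (y : V -> R) (w : V) : R :=
  let M := ranking adj dl [set: V] y in
  match [seq p <- M | p.1 == w] with
  | p :: _ => (1 - g (y p.2))%R
  | [::] => match [seq p <- M | p.2 == w] with
            | p :: _ => g (y p.2)
            | [::] => 0%R
            end
  end.

End Model.

Definition indic (b : bool) : R := if b then 1%R else 0%R.
Definition Rltb (a b : R) : bool := if Rlt_dec a b then true else false.

Definition has_RInt (f : R -> R) (a b l : R) : Prop :=
  exists pr : Riemann_integrable f a b, RiemannInt pr = l.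

(* Main.v *)
Require Import Defs.
From Stdlib Require Import Reals Lra Lia.
From Coquelicot Require Coquelicot.

Module Integ.
Import Coquelicot.Coquelicot.
Local Open Scope R_scope.

Lemma const_open (F : R -> R) x y c : x <= y -> (forall t, x < t < y -> F t = c) ->
  {pr : IsStepFun F x y & RiemannInt_SF (mkStepFun pr) = c * (y - x)}.
Proof.
intros Hxy H.
assert (ac : adapted_couple F x y (cons x (cons y nil)) (cons c nil)).
{ unfold adapted_couple; repeat split.
  - red; intros i Hi; simpl in Hi; destruct i; [simpl; lra | lia].
  - simpl; unfold Rmin; destruct (Rle_dec x y); lra.
  - simpl; unfold Rmax; destruct (Rle_dec x y); lra.
  - intros i Hi; simpl in Hi; destruct i; [|lia].
    unfold constant_D_eq, open_interval; simpl; intros t Ht; apply H; exact Ht. }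
exists (existT _ (cons x (cons y nil)) (existT _ (cons c nil) ac)).
unfold RiemannInt_SF; simpl. destruct (Rle_dec x y); [simpl; ring | lra].
Qed.

Fixpoint ssum (v : nat -> R) (k : nat) : R :=
  match k with O => 0 | S k' => ssum v k' + v k' end.

Lemma ssum_ext (v w : nat -> R) k : (forall j, v j = w j) -> ssum v k = ssum w k.
Proof. intros H; induction k; simpl; [reflexivity | rewrite IHk, H; reflexivity]. Qed.

Lemma ssum_tel (G : nat -> R) k : ssum (fun j => G (S j) - G j) k = G k - G O.
Proof. induction k; simpl; [ring | rewrite IHk; ring]. Qed.

Lemma chain (F : R -> R) (a h : R) (v : nat -> R) : 0 < h ->
  (forall j t, a + INR j * h < t < a + INR (S j) * h -> F t = v j) ->
  forall k, {pr : IsStepFun F a (a + INR k * h) &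
             RiemannInt_SF (mkStepFun pr) = ssum v k * h}.
Proof.
intros Hh Hv k. induction k.
- destruct (const_open F a (a + INR 0 * h) 0) as [pr Hpr].
  + simpl; lra.
  + intros t Ht; simpl in Ht; lra.
  + exists pr; rewrite Hpr; simpl; ring.
- destruct IHk as [pr1 H1].
  destruct (const_open F (a + INR k * h) (a + INR (S k) * h) (v k)) as [pr2 H2].
  + rewrite S_INR; nra.
  + apply Hv.
  + exists (@StepFun_P46 F _ _ _ pr1 pr2).
    rewrite <- (@StepFun_P43 F _ _ _ pr1 pr2 (@StepFun_P46 F _ _ _ pr1 pr2)).
    rewrite H1, H2. simpl ssum. rewrite S_INR. ring.
Qed.

Lemma mono_RI (f : R -> R) a b : a < b -> (forall x y, x <= y -> f x <= f y) ->
  Riemann_integrable f a b.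
Proof.
intros Hab Hm eps.
assert (Hfab : f a <= f b) by (apply Hm; lra).
assert (He : 0 < eps) by apply cond_pos.
set (K := (b - a) * (f b - f a) / eps).
assert (HK : 0 <= K).
{ unfold K, Rdiv. apply Rmult_le_pos; [apply Rmult_le_pos; lra|].
  left; apply Rinv_0_lt_compat; lra. }
set (n := Z.to_nat (up K)).
assert (Hn : K < INR n).
{ destruct (archimed K) as [H1 _]. unfold n. rewrite INR_IZR_INZ, Znat.Z2Nat.id; [lra|].
  apply le_IZR. lra. }
assert (Hn0 : 0 < INR n) by lra.
set (h := (b - a) / INR n).
assert (Hh : 0 < h) by (unfold h; apply Rdiv_lt_0_compat; lra).
assert (Hb : a + INR n * h = b) by (unfold h; field; lra).
set (k t := Int_part ((t - a) / h)).
set (phi t := f (a + IZR (k t) * h)).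
set (psi t := f (a + (IZR (k t) + 1) * h) - f (a + IZR (k t) * h)).
assert (Hk : forall j t, a + INR j * h < t < a + INR (S j) * h -> k t = Z.of_nat j).
{ intros j t Ht. unfold k. symmetry. apply Int_part_spec. rewrite <- INR_IZR_INZ.
  rewrite S_INR in Ht.
  assert (E : t - a = ((t - a) / h) * h) by (field; lra).
  set (r := (t - a) / h) in *.
  assert (A1 : INR j * h < r * h) by lra.
  assert (A2 : r * h < (INR j + 1) * h) by lra.
  apply Rmult_lt_reg_r in A1; [|lra]. apply Rmult_lt_reg_r in A2; [|lra]. lra. }
destruct (chain phi a h (fun j => f (a + INR j * h)) Hh) with (k := n) as [prphi _].
{ intros j t Ht. unfold phi. rewrite (Hk j t Ht), <- INR_IZR_INZ. reflexivity. }
destruct (chain psi a h (fun j => f (a + (INR j + 1) * h) - f (a + INR j * h)) Hh) with (k := n) as [prpsi Hpsi].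
{ intros j t Ht. unfold psi. rewrite (Hk j t Ht), <- INR_IZR_INZ. reflexivity. }
assert (Hval : ssum (fun j => f (a + (INR j + 1) * h) - f (a + INR j * h)) n * h = (f b - f a) * h).
{ pose (G := fun i => f (a + INR i * h)).
  rewrite (ssum_ext _ (fun j => G (S j) - G j)).
  - rewrite ssum_tel. unfold G. rewrite Hb. simpl. replace (a + 0 * h) with a by ring. reflexivity.
  - intros j. unfold G. rewrite S_INR. reflexivity. }
rewrite Hval in Hpsi.
revert prphi prpsi Hpsi. rewrite Hb. intros prphi prpsi Hpsi.
exists (mkStepFun prphi). exists (mkStepFun prpsi). split.
- intros t Ht. simpl. unfold phi, psi.
  rewrite Rmin_left, Rmax_right in Ht by lra.
  destruct (base_Int_part ((t - a) / h)) as [B1 B2].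
  fold (k t) in B1, B2.
  assert (E : t - a = ((t - a) / h) * h) by (field; lra).
  set (r := (t - a) / h) in *.
  assert (C1 : a + IZR (k t) * h <= t).
  { assert (IZR (k t) * h <= r * h) by (apply Rmult_le_compat_r; lra). lra. }
  assert (C2 : t <= a + (IZR (k t) + 1) * h).
  { assert (r * h <= (IZR (k t) + 1) * h) by (apply Rmult_le_compat_r; lra). lra. }
  assert (D1 := Hm _ _ C1). assert (D2 := Hm _ _ C2).
  rewrite Rabs_right by lra. lra.
- simpl. rewrite Hpsi. rewrite Rabs_right by nra.
  assert (EK : eps * K = (b - a) * (f b - f a)) by (unfold K; field; lra).
  unfold h.
  replace ((f b - f a) * ((b - a) / INR n)) with (eps * (K / INR n)) by (unfold K; field; lra).
  rewrite <- (Rmult_1_r eps) at 2. apply Rmult_lt_compat_l; [lra|].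
  apply (Rmult_lt_reg_r (INR n)); [lra|]. unfold Rdiv. rewrite Rmult_assoc, Rinv_l; lra.
Qed.

Lemma mono_RI01 (g : R -> R) th : 0 < th <= 1 ->
  (forall a b, 0 <= a -> a <= b -> b <= 1 -> g a <= g b) -> Riemann_integrable g 0 th.
Proof.
intros Hth Hg.
set (G x := g (Rmax 0 (Rmin x th))).
apply (Riemann_integrable_ext G).
- intros x Hx. rewrite Rmin_left, Rmax_right in Hx by lra.
  unfold G. rewrite Rmin_left by lra. rewrite Rmax_right by lra. reflexivity.
- apply mono_RI; [lra|]. intros x y Hxy. unfold G. apply Hg.
  + apply Rmax_l.
  + apply Rle_max_compat_l. apply Rle_min_compat_r. exact Hxy.
  + apply Rmax_lub; [lra|]. apply Rle_trans with th; [apply Rmin_r | lra].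
Qed.

Lemma is_RInt_cst (a b c : R) : is_RInt (fun _ => c) a b ((b - a) * c).
Proof.
pose proof (@is_RInt_const R_NormedModule a b c) as Hc.
assert (E0 : @scal R_Ring (NormedModule.ModuleSpace R_AbsRing R_NormedModule) (b - a) c = (b - a) * c) by reflexivity.
rewrite E0 in Hc. exact Hc.
Qed.

Lemma is_RInt_val (f : R -> R) (a b l l' : R) : is_RInt f a b l -> l = l' -> is_RInt f a b l'.
Proof. intros H E; rewrite <- E; exact H. Qed.

Lemma is_RInt_has f a b l : is_RInt f a b l -> has_RInt f a b l.
Proof.
intros H. assert (ex : ex_RInt f a b) by (exists l; exact H).
exists (ex_RInt_Reals_0 _ _ _ ex). rewrite <- RInt_Reals. apply is_RInt_unique; exact H.
Qed.


Lemma h_int (g : R -> R) th : 0 <= th <= 1 ->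
  (forall a b, 0 <= a -> a <= b -> b <= 1 -> g a <= g b) ->
  is_RInt (fun s => if Rltb s th then g s else 0) 0 1 (RInt g 0 th) /\
  has_RInt g 0 th (RInt g 0 th).
Proof.
intros Hth Hg.
assert (ex : ex_RInt g 0 th).
{ destruct (Req_dec th 0) as [E|E].
  - rewrite E. apply ex_RInt_point.
  - apply ex_RInt_Reals_1. apply mono_RI01; [lra | exact Hg]. }
split; [| apply is_RInt_has; exact (RInt_correct g 0 th ex)].
set (hf := fun s => if Rltb s th then g s else 0).
assert (H1 : is_RInt hf 0 th (RInt g 0 th)).
{ apply is_RInt_ext with g; [| exact (RInt_correct g 0 th ex)].
  intros x Hx. rewrite Rmin_left, Rmax_right in Hx by lra.
  unfold hf, Rltb. destruct (Rlt_dec x th); [reflexivity | lra]. }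
assert (H2 : is_RInt hf th 1 0).
{ apply is_RInt_ext with (fun _ => 0).
  + intros x Hx. rewrite Rmin_left, Rmax_right in Hx by lra.
    unfold hf, Rltb. destruct (Rlt_dec x th); [lra | reflexivity].
  + pose proof (@is_RInt_const R_NormedModule th 1 0) as Hc.
    assert (E0 : @scal R_Ring (NormedModule.ModuleSpace R_AbsRing R_NormedModule) (1 - th) 0 = 0) by apply Rmult_0_r.
    rewrite E0 in Hc.
    exact Hc. }
pose proof (is_RInt_Chasles hf 0 th 1 _ _ H1 H2) as H3.
eapply is_RInt_val; [exact H3 | apply Rplus_0_r].
Qed.

Lemma final_int (g : R -> R) tau gamma (f : R -> R -> R) :
  0 <= tau <= 1 -> 0 <= gamma <= 1 ->
  (forall a b, 0 <= a -> a <= b -> b <= 1 -> g a <= g b) ->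
  (forall yu yv, 0 <= yu -> 0 <= yv ->
     f yu yv = (if Rltb yu tau then g yu else 0) + (if Rltb yv gamma then g yv else 0)) ->
  exists (F : R -> R) (I1 I2 : R),
    (forall yv, 0 <= yv <= 1 -> has_RInt (fun yu => f yu yv) 0 1 (F yv)) /\
    has_RInt g 0 tau I1 /\ has_RInt g 0 gamma I2 /\
    has_RInt F 0 1 (I1 + I2).
Proof.
intros Ht Hga Hg Hf.
destruct (h_int g tau Ht Hg) as [Hh1 Hg1].
destruct (h_int g gamma Hga Hg) as [Hh2 Hg2].
set (h1 := fun s => if Rltb s tau then g s else 0) in *.
set (h2 := fun s => if Rltb s gamma then g s else 0) in *.
exists (fun yv => RInt g 0 tau + h2 yv), (RInt g 0 tau), (RInt g 0 gamma).
split; [|split; [exact Hg1 | split; [exact Hg2 |]]].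
- intros yv Hyv. apply is_RInt_has.
  pose proof (is_RInt_plus _ _ 0 1 _ _ Hh1 (is_RInt_cst 0 1 (h2 yv))) as Hp.
  apply is_RInt_ext with (fun y => plus (h1 y) (h2 yv)).
  + intros x Hx. rewrite Rmin_left, Rmax_right in Hx by lra.
    rewrite Hf by lra. reflexivity.
  + eapply is_RInt_val; [exact Hp |]. simpl. unfold plus; simpl. ring.
- apply is_RInt_has.
  pose proof (is_RInt_plus _ _ 0 1 _ _ (is_RInt_cst 0 1 (RInt g 0 tau)) Hh2) as Hp.
  apply is_RInt_ext with (fun y => plus (RInt g 0 tau) (h2 y)).
  + intros x Hx. reflexivity.
  + eapply is_RInt_val; [exact Hp |]. unfold plus; simpl. ring.
Qed.

End Integ.

From mathcomp Require Import all_boot.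
From Stdlib Require Import Reals Lra FunctionalExtensionality.
Set Implicit Arguments. Unset Strict Implicit. Unset Printing Implicit Defensive.

Section Comb.
Variable V : finType.

Lemma minpick_none {y : V -> R} {l} : minpick y l = None -> l = [::].
Proof. case: l => //= a l; case: (minpick y l) => // z; by case: Rle_dec. Qed.

Lemma minpick_some {y : V -> R} {l x} : minpick y l = Some x ->
  x \in l /\ forall z, z \in l -> (y x <= y z)%R.
Proof.
elim: l x => //= a l IH x.
case E: (minpick y l) => [z|].
- have [zin zmin] := IH z E.
  case: Rle_dec => H [<-].
  + split; first by rewrite inE eqxx.
    move=> t; rewrite inE => /orP [/eqP->|/zmin]; lra.
  + split; first by rewrite inE zin orbT.
    move=> t; rewrite inE => /orP [/eqP->|/zmin]; lra.
- move: (minpick_none E) => -> [<-]; split; first by rewrite inE.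
  move=> t; rewrite inE => /eqP ->; lra.
Qed.

Lemma minpick_ext (y1 y2 : V -> R) l : (forall z, z \in l -> y1 z = y2 z) ->
  minpick y1 l = minpick y2 l.
Proof.
elim: l => //= a l IH H.
rewrite IH; last by move=> z zl; apply: H; rewrite inE zl orbT.
case E: (minpick y2 l) => [z|] //.
have [zin _] := minpick_some E.
by rewrite (H a) ?mem_head // (H z) // inE zin orbT.
Qed.

Lemma minpick_lower (y1 y2 : V -> R) w l : (y2 w < y1 w)%R ->
  (forall z, z != w -> y2 z = y1 z) ->
  minpick y2 l = minpick y1 l \/ minpick y2 l = Some w.
Proof.
move=> Hw Hz; elim: l => /= [|a l IH]; first by left.
case: IH => E.
- rewrite E. case E1: (minpick y1 l) => [z|]; last by left.
  case: (eqVneq a w) => [->|aw].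
  + case: (eqVneq z w) => [->|zw].
    * case: (Rle_dec (y2 w) (y2 w)) => H1 /=; last lra. by right.
    * rewrite (Hz z zw).
      case: (Rle_dec (y2 w) (y1 z)) => H1 /=; first by right.
      case: (Rle_dec (y1 w) (y1 z)) => H2 /=; last by left. lra.
  + rewrite (Hz a aw).
    case: (eqVneq z w) => [->|zw]; last by rewrite (Hz z zw); left.
    case: (Rle_dec (y1 a) (y2 w)) => H1 /=; last by right.
    case: (Rle_dec (y1 a) (y1 w)) => H2 /=; first by left. lra.
- rewrite E. case E1: (minpick y1 l) => [z|].
  + have [win wmin] := minpick_some E.
    have [zin zmin1] := minpick_some E1.
    have h1 := wmin z zin.
    have h2 : (y2 z <= y1 z)%R.
      case: (eqVneq z w) => [->|zw]; [lra| rewrite (Hz z zw); lra].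
    case: (eqVneq a w) => [->|aw].
    * case: (Rle_dec (y2 w) (y2 w)) => H1 /=; last lra. by right.
    * rewrite (Hz a aw). case: (Rle_dec (y1 a) (y2 w)) => H1 /=; last by right.
      left. case: (Rle_dec (y1 a) (y1 z)) => H2 //=. exfalso; apply: H2; lra.
  + by rewrite (minpick_none E1) in E.
Qed.

Lemma minpick_add (y : V -> R) (P1 P2 : pred V) x s :
  (forall z, z != x -> P1 z = P2 z) -> P1 x = false ->
  minpick y (filter P2 s) = minpick y (filter P1 s) \/
  minpick y (filter P2 s) = Some x.
Proof.
move=> HP Hx; elim: s => /= [|a s IH]; first by left.
have sub : forall z, z \in filter P1 s -> z \in filter P2 s.
  move=> z; rewrite !mem_filter => /andP [Pz ->].
  have zx : z != x by apply/eqP => E; rewrite E Hx in Pz.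
  by rewrite -HP // Pz.
case: (eqVneq a x) => [->|ax].
- rewrite Hx. case: (P2 x) => //=.
  case: IH => ->; last by case: (minpick y (filter P1 s)) => [z|] //=; case: Rle_dec; auto.
  case: (minpick y (filter P1 s)) => [z|] //=; last by right.
  case: Rle_dec; auto.
- rewrite (HP a ax). case: (P2 a) => //=.
  case: IH => E; first by rewrite E; left.
  rewrite E.
  have [xin xmin] := minpick_some E.
  case: Rle_dec => H1; last by right.
  left. case E1: (minpick y (filter P1 s)) => [z|] //.
  have [zin _] := minpick_some E1.
  have := xmin z (sub z zin).
  case: Rle_dec => // H2 H3; exfalso; apply: H2; lra.
Qed.

End Comb.

Section Run.
Variable V : finType.
Variable adj : rel V.
Hypothesis adj_irr : forall a, ~~ adj a a.
Variable side : V -> bool.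
Hypothesis bip : forall a b, adj a b -> side a != side b.

Definition candp (B : V -> bool) w := [seq x <- enum V | adj w x && ~~ B x].
Definition pick (y : V -> R) (B : V -> bool) w :=
  if B w then None else minpick y (candp B w).
Definition nxt (B : V -> bool) w (r : option V) z :=
  B z || (z == w) || (match r with Some c => c == z | None => false end).
Definition Padd (P : V -> bool) (r : option V) z :=
  P z || (match r with Some c => c == z | None => false end).

Definition Rel (sr : bool) (B1 B2 P1 P2 : V -> bool) :=
 (forall z, side z != sr -> P1 z -> P2 z) /\
 ((forall z, B1 z = B2 z) \/
  (exists x, side x = sr /\ B1 x /\ ~~ B2 x /\ forall z, z != x -> B1 z = B2 z) \/
  (exists x, side x != sr /\ ~~ B1 x /\ B2 x /\ P2 x /\ forall z, z != x -> B1 z = B2 z)).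

Lemma pick_some (y : V -> R) (B : V -> bool) (w c : V) : pick y B w = Some c -> ~~ B w /\ adj w c /\ ~~ B c.
Proof.
rewrite /pick; case: (B w) => //= E.
have [cin _] := minpick_some E.
by move: cin; rewrite mem_filter => /andP [/andP [-> ->] _].
Qed.

Lemma pick_eq (y : V -> R) (B1 B2 : V -> bool) (w : V) : (forall z, B1 z = B2 z) -> pick y B1 w = pick y B2 w.
Proof.
move=> H; rewrite /pick /candp H.
by rewrite (eq_filter (a2 := fun x => adj w x && ~~ B2 x)) // => z; rewrite H.
Qed.

Lemma pick_add (y : V -> R) (B1 B2 : V -> bool) (x w : V) : B1 x -> (forall z, z != x -> B1 z = B2 z) -> ~~ B1 w ->
  pick y B2 w = pick y B1 w \/ pick y B2 w = Some x.
Proof.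
move=> b1x H b1w.
have wx : w != x by apply/eqP => E; rewrite E b1x in b1w.
rewrite /pick -(H w wx) (negbTE b1w) /candp.
apply: minpick_add => [z zx|]; first by rewrite H.
by rewrite b1x andbF.
Qed.

Lemma neqC (a b : V) : a != b -> (b == a) = false.
Proof. by rewrite eq_sym => /negbTE. Qed.

Lemma bool3 (a b c : bool) : a != b -> a != c -> b = c.
Proof. by case: a; case: b; case: c. Qed.

Lemma side3 (a b c : V) : side a != side b -> side a != side c -> side b = side c.
Proof. by case: (side a); case: (side b); case: (side c). Qed.

Lemma Rel_step (y : V -> R) (sr : bool) (B1 B2 P1 P2 : V -> bool) (w : V) : Rel sr B1 B2 P1 P2 ->
  Rel sr (nxt B1 w (pick y B1 w)) (nxt B2 w (pick y B2 w))
         (Padd P1 (pick y B1 w)) (Padd P2 (pick y B2 w)).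
Proof.
move=> [HP HR].
case: HR => [Heq | [[x [sx [b1x [b2x Hx]]]] | [x [sx [b1x [b2x [p2x Hx]]]]]]].
- rewrite (pick_eq y w Heq).
  split.
  + move=> z sz; rewrite /Padd => /orP [H|->]; last by rewrite orbT.
    by rewrite HP.
  + by left => z; rewrite /nxt Heq.
- case Bw: (B2 w).
  + have wx : w != x by apply/eqP => E; rewrite -E Bw in b2x.
    have B1w : B1 w by rewrite Hx.
    rewrite /pick B1w Bw /=. split; first by move=> z sz; rewrite /Padd !orbF; apply: HP.
    right; left; exists x; rewrite /nxt /= b1x orbF (negbTE b2x) (neqC wx) ; do ! split => //.
    by move=> z zx; rewrite Hx.
  + case: (eqVneq w x) => [wx|wx].
    * subst w. have -> : pick y B1 x = None by rewrite /pick b1x.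
      case E2: (pick y B2 x) => [c|].
      -- have [_ [axc b2c]] := pick_some E2.
         have cx : c != x by apply/eqP => E; rewrite E (negbTE (adj_irr x)) in axc.
         have b1c : B1 c = false by rewrite Hx // (negbTE b2c).
         split.
         ++ move=> z sz; rewrite /Padd orbF => H; by rewrite (HP z sz H).
         ++ right; right; exists c; rewrite /nxt /Padd /= b1c eqxx !orbT (negbTE cx).
            split; first by rewrite -sx eq_sym; apply: (bip axc).
            do ! split => //.
            move=> z zc; case: (eqVneq z x) => [->|zx]; first by rewrite ?eqxx ?b1x ?b2x ?orbT.
            by rewrite (Hx z zx) ?(negbTE zx) ?(neqC zx) ?(negbTE zc) ?(neqC zc) ?orbF.
      -- split; first by move=> z sz; rewrite /Padd !orbF; apply: HP.
         left => z; rewrite /nxt !orbF.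
         case: (eqVneq z x) => [->|zx]; first by rewrite ?eqxx ?b1x ?b2x ?orbT.
         by rewrite Hx.
    * have B1w : ~~ B1 w by rewrite Hx ?Bw.
      case: (pick_add y b1x Hx B1w) => E.
      -- rewrite E. case E1: (pick y B1 w) => [c|].
         ++ have [_ [_ b1c]] := pick_some E1.
            have cx : c != x by apply/eqP => E'; rewrite E' b1x in b1c.
            split.
            ** move=> z sz; rewrite /Padd => /orP [H|->]; last by rewrite orbT.
               by rewrite HP.
            ** right; left; exists x; rewrite /nxt b1x (negbTE b2x) (neqC wx) (negbTE cx) /=.
               do ! split => //. by move=> z zx; rewrite Hx.
         ++ split; first by move=> z sz; rewrite /Padd !orbF; apply: HP.
            right; left; exists x; rewrite /nxt b1x (negbTE b2x) (neqC wx) /=.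
            do ! split => //. by move=> z zx; rewrite Hx.
      -- rewrite E. have [_ [awx _]] := pick_some E.
         case E1: (pick y B1 w) => [c|].
         ++ have [_ [awc b1c]] := pick_some E1.
            have cx : c != x by apply/eqP => E'; rewrite E' b1x in b1c.
            have cw : c != w by apply/eqP => E'; rewrite E' (negbTE (adj_irr w)) in awc.
            have scx : side c = side x := side3 (bip awc) (bip awx).
            split.
            ** move=> z sz; rewrite /Padd => /orP [H|/eqP E']; first by rewrite HP.
               by rewrite -E' scx sx eqxx in sz.
            ** right; left; exists c; rewrite /nxt eqxx !orbT (negbTE cw) -(Hx c cx) (negbTE b1c) eq_sym (negbTE cx) /=.
               do ! split => //; first by rewrite scx.
               move=> z zc; case: (eqVneq z x) => [->|zx]; first by rewrite ?eqxx ?b1x ?b2x ?orbT.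
               by rewrite (Hx z zx) ?(negbTE zx) ?(neqC zx) ?(negbTE zc) ?(neqC zc) ?orbF.
         ++ split; first by move=> z sz; rewrite /Padd orbF => H; rewrite HP.
            left => z; rewrite /nxt orbF.
            case: (eqVneq z x) => [->|zx]; first by rewrite ?eqxx ?b1x ?b2x ?orbT.
            by rewrite (Hx z zx) ?(negbTE zx) ?(neqC zx) ?(negbTE zc) ?(neqC zc) ?orbF.
- case Bw: (B1 w).
  + have wx : w != x by apply/eqP => E; rewrite -E Bw in b1x.
    have B2w : B2 w by rewrite -Hx.
    rewrite /pick B2w Bw /=. split; first by move=> z sz; rewrite /Padd !orbF; apply: HP.
    right; right; exists x; rewrite /nxt /Padd /= b2x orbF (negbTE b1x) (neqC wx) p2x; do ! split => //.
    by move=> z zx; rewrite Hx.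
  + case: (eqVneq w x) => [wx|wx].
    * subst w. have -> : pick y B2 x = None by rewrite /pick b2x.
      case E1: (pick y B1 x) => [c|].
      -- have [_ [axc b1c]] := pick_some E1.
         have cx : c != x by apply/eqP => E; rewrite E (negbTE (adj_irr x)) in axc.
         have b2c : B2 c = false by rewrite -Hx // (negbTE b1c).
         have sc : side c = sr := bool3 (bip axc) sx.
         split.
         ++ move=> z sz; rewrite /Padd => /orP [H|/eqP E']; first by rewrite HP.
            by rewrite -E' sc eqxx in sz.
         ++ right; left; exists c; rewrite /nxt /= b2c eqxx !orbT (negbTE cx).
            do ! split => //.
            move=> z zc; case: (eqVneq z x) => [->|zx]; first by rewrite ?eqxx ?b1x ?b2x ?orbT.
            by rewrite (Hx z zx) ?(negbTE zx) ?(neqC zx) ?(negbTE zc) ?(neqC zc) ?orbF.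
      -- split; first by move=> z sz; rewrite /Padd !orbF; apply: HP.
         left => z; rewrite /nxt !orbF.
         case: (eqVneq z x) => [->|zx]; first by rewrite ?eqxx ?b1x ?b2x ?orbT.
         by rewrite Hx.
    * have B2w : ~~ B2 w by rewrite -Hx ?Bw.
      have Hx' : forall z, z != x -> B2 z = B1 z by move=> z zx; rewrite Hx.
      case: (pick_add y b2x Hx' B2w) => E.
      -- rewrite E. case E2: (pick y B2 w) => [c|].
         ++ have [_ [_ b2c]] := pick_some E2.
            have cx : c != x by apply/eqP => E'; rewrite E' b2x in b2c.
            split.
            ** move=> z sz; rewrite /Padd => /orP [H|->]; last by rewrite orbT.
               by rewrite HP.
            ** right; right; exists x; rewrite /nxt /Padd b2x p2x (negbTE b1x) (neqC wx) (negbTE cx) /=.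
               do ! split => //. by move=> z zx; rewrite Hx.
         ++ split; first by move=> z sz; rewrite /Padd !orbF; apply: HP.
            right; right; exists x; rewrite /nxt /Padd b2x p2x (negbTE b1x) (neqC wx) /=.
            do ! split => //. by move=> z zx; rewrite Hx.
      -- rewrite E. have [_ [awx _]] := pick_some E.
         case E2: (pick y B2 w) => [c|].
         ++ have [_ [awc b2c]] := pick_some E2.
            have cx : c != x by apply/eqP => E'; rewrite E' b2x in b2c.
            have cw : c != w by apply/eqP => E'; rewrite E' (negbTE (adj_irr w)) in awc.
            have scx : side c = side x := side3 (bip awc) (bip awx).
            split.
            ** move=> z sz; rewrite /Padd => /orP [H|/eqP E']; first by rewrite HP.
               by rewrite -E' p2x.
            ** right; right; exists c; rewrite /nxt /Padd eqxx !orbT (negbTE cw) (Hx c cx) (negbTE b2c) (neqC cx) /=.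
               do ! split => //; first by rewrite scx.
               move=> z zc; case: (eqVneq z x) => [->|zx]; first by rewrite ?eqxx ?b1x ?b2x ?orbT.
               by rewrite (Hx z zx) ?(negbTE zx) ?(neqC zx) ?(negbTE zc) ?(neqC zc) ?orbF.
         ++ split.
            ** move=> z sz; rewrite /Padd orbF => /orP [H|/eqP E']; first by rewrite HP.
               by rewrite -E' p2x.
            ** left => z; rewrite /nxt orbF.
               case: (eqVneq z x) => [->|zx]; first by rewrite ?eqxx ?b1x ?b2x ?orbT.
               by rewrite (Hx z zx) ?(negbTE zx) ?(neqC zx) ?(negbTE zc) ?(neqC zc) ?orbF.
Qed.

End Run.

Section RunM.
Variable V : finType.
Variable adj : rel V.
Hypothesis adj_sym : forall a b, adj a b = adj b a.
Hypothesis adj_irr : forall a, ~~ adj a a.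

Definition bl (S : {set V}) (M : seq (V * V)) z := (z \notin S) || matched M z.
Definition pas (M : seq (V * V)) (z : V) := has (fun p => p.2 == z) M.
Definition bp (S : {set V}) M (p : seq V) z := bl S M z || (z \in p).
Definition Dead (p : seq V) (S : {set V}) M :=
  forall z, z \in p -> ~~ bl S M z -> forall t, adj z t -> bl S M t.

Lemma matched_rcons (M : seq (V * V)) a b z :
  matched (rcons M (a, b)) z = (a == z) || (b == z) || matched M z.
Proof. by rewrite /matched has_rcons. Qed.

Lemma step_pick (S : {set V}) (y : V -> R) M p w : w \notin p -> Dead p S M ->
  ranking_step adj S y M w =
  match pick adj y (bp S M p) w with Some c => rcons M (w, c) | None => M end.
Proof.
move=> wp D.
rewrite /ranking_step /pick.
have Hw : bp S M p w = bl S M w by rewrite /bp (negbTE wp) orbF.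
rewrite Hw /bl.
case wS: (w \in S) => //=; case Hm: (matched M w) => //=.
have -> : [seq x <- enum V | (x \in S) && adj w x && ~~ matched M x] =
          candp adj (bp S M p) w.
  rewrite /candp; apply: eq_filter => x; rewrite /bp /bl.
  case xS: (x \in S); case axw: (adj w x); case mx: (matched M x);
    case xp: (x \in p) => //=.
  have := D x xp; rewrite /bl xS mx => /(_ isT w); rewrite adj_sym axw wS Hm.
  by move=> /(_ isT).
by [].
Qed.

Lemma bp_step (S : {set V}) (y : V -> R) M p w : w \notin p -> Dead p S M ->
  bp S (ranking_step adj S y M w) (w :: p) =
  nxt (bp S M p) w (pick adj y (bp S M p) w).
Proof.
move=> wp D; apply: functional_extensionality => z.
rewrite (step_pick y wp D) /nxt.
case: (pick adj y (bp S M p) w) => [c|]; rewrite /bp /bl ?matched_rcons inE.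
- rewrite (eq_sym w z).
  by case: (z \in S); case: (z == w); case: (c == z); case: (matched M z); case: (z \in p).
- by case: (z \in S); case: (z == w); case: (matched M z); case: (z \in p).
Qed.

Lemma pas_step (S : {set V}) (y : V -> R) M p w : w \notin p -> Dead p S M ->
  pas (ranking_step adj S y M w) = Padd (pas M) (pick adj y (bp S M p) w).
Proof.
move=> wp D; apply: functional_extensionality => z.
rewrite (step_pick y wp D) /Padd.
case: (pick adj y (bp S M p) w) => [c|]; rewrite /pas ?has_rcons /= ?orbF //.
by rewrite orbC.
Qed.

Lemma Dead_step (S : {set V}) (y : V -> R) M p w : w \notin p -> Dead p S M ->
  Dead (w :: p) S (ranking_step adj S y M w).
Proof.
move=> wp D.
have mono : forall t, bl S M t -> bl S (ranking_step adj S y M w) t.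
  move=> t; rewrite (step_pick y wp D).
  case: (pick adj y (bp S M p) w) => [c|] //.
  rewrite /bl matched_rcons; case/orP => H; rewrite H ?orbT //.
move=> z; rewrite inE => /orP [/eqP ->|zp].
- rewrite (step_pick y wp D).
  case E: (pick adj y (bp S M p) w) => [c|].
  + by rewrite /bl matched_rcons eqxx /= orbT.
  + move=> Hw t awt.
    move: E; rewrite /pick.
    have -> : bp S M p w = bl S M w by rewrite /bp (negbTE wp) orbF.
    rewrite (negbTE Hw) => /minpick_none Hc.
    have : ~~ has (fun x => adj w x && ~~ bp S M p x) (enum V).
      by rewrite has_filter negbK; apply/eqP.
    move=> /hasPn /(_ t (mem_enum _ t)).
    rewrite awt /= /bp negbK => /orP [->//|tp].
    apply/negPn/negP => nbt.
    have := D t tp nbt w; rewrite adj_sym awt => /(_ isT).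
    by rewrite (negbTE Hw).
- move=> nb t azt; apply: (mono).
  apply: (D z zp) => //; apply/negP => H; move/negP: nb; apply; exact: (mono).
Qed.

Variable side : V -> bool.
Hypothesis bip : forall a b, adj a b -> side a != side b.

Definition Inv sr (S1 S2 : {set V}) p M1 M2 :=
  Dead p S1 M1 /\ Dead p S2 M2 /\
  Rel side sr (bp S1 M1 p) (bp S2 M2 p) (pas M1) (pas M2).

Lemma Inv_fold sr S1 S2 (y : V -> R) s : uniq s -> forall p M1 M2,
  (forall w, w \in s -> w \notin p) -> Inv sr S1 S2 p M1 M2 ->
  exists p', Inv sr S1 S2 p' (foldl (ranking_step adj S1 y) M1 s)
                               (foldl (ranking_step adj S2 y) M2 s).
Proof.
elim: s => [|w s IH] /=; first by move=> _ p M1 M2 _ H; exists p.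
move=> /andP [ws us] p M1 M2 Hp [D1 [D2 HR]].
have wp : w \notin p by apply: Hp; rewrite inE eqxx.
apply: (IH us (w :: p)).
move: wp => wp.
- move=> z zs; rewrite inE negb_or; apply/andP; split.
  + by apply/eqP => E; rewrite -E zs in ws.
  + by apply: Hp; rewrite inE zs orbT.
- split; first exact: Dead_step.
  split; first exact: Dead_step.
  rewrite (bp_step y wp D1) (bp_step y wp D2) (pas_step y wp D1) (pas_step y wp D2).
  exact: Rel_step.
Qed.

End RunM.

Section Main.
Variable V : finType.
Variable adj : rel V.
Variable dl : V -> nat.
Hypothesis adj_sym : forall a b, adj a b = adj b a.
Hypothesis adj_irr : forall a, ~~ adj a a.

Lemma deadline_uniq : uniq (deadline_order dl).
Proof. by rewrite /deadline_order sort_uniq enum_uniq. Qed.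

Lemma pas_stepM (S : {set V}) (y : V -> R) M w x :
  pas M x -> pas (ranking_step adj S y M w) x.
Proof.
rewrite /ranking_step; case: ifP => // _.
case: minpick => [c|] //. by rewrite /pas has_rcons => ->; rewrite orbT.
Qed.

Lemma mono_fold (S : {set V}) (y1 y2 : V -> R) w :
  (y2 w < y1 w)%R -> (forall z, z != w -> y2 z = y1 z) ->
  forall s M1 M2, (M1 = M2 \/ pas M2 w) ->
  foldl (ranking_step adj S y1) M1 s = foldl (ranking_step adj S y2) M2 s \/
  pas (foldl (ranking_step adj S y2) M2 s) w.
Proof.
move=> Hw Hz; elim => [|x s IH] M1 M2 H /=; first by [].
apply: IH. case: H => [<-|H]; last by right; apply: pas_stepM.
rewrite /ranking_step; case: ifP => _; last by left.
set l := [seq _ <- enum V | _].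
case: (@minpick_lower _ y1 y2 w l Hw Hz) => ->; first by left.
by right; rewrite /pas has_rcons /= eqxx.
Qed.

Lemma passive_mono (S : {set V}) (y : V -> R) w t t' : (t' < t)%R ->
  passive adj dl S (upd y w t) w -> passive adj dl S (upd y w t') w.
Proof.
move=> Htt; rewrite /passive /ranking.
have Hw : (upd y w t' w < upd y w t w)%R by rewrite /upd eqxx.
have Hz : forall z, z != w -> upd y w t' z = upd y w t z.
  by move=> z zw; rewrite /upd (negbTE zw).
case: (@mono_fold S _ _ w Hw Hz (deadline_order dl) [::] [::] (or_introl erefl)) => [<-//|].
by [].
Qed.

Lemma ranking_ext (S : {set V}) (y1 y2 : V -> R) :
  (forall z, z \in S -> y1 z = y2 z) -> ranking adj dl S y1 = ranking adj dl S y2.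
Proof.
move=> H.
have step_eq : forall M w, ranking_step adj S y1 M w = ranking_step adj S y2 M w.
  move=> M w; rewrite /ranking_step; case: ifP => // _.
  rewrite (minpick_ext (y2 := y2)) // => z.
  by rewrite mem_filter => /andP [/andP [/andP [zS _] _] _]; apply: H.
rewrite /ranking; elim: (deadline_order dl) [::] => //= a s IH M.
by rewrite step_eq IH.
Qed.

Definition Mok (M : seq (V * V)) := forall p q, p \in M -> q \in M -> p.2 != q.1.

Lemma Mok_step (S : {set V}) (y : V -> R) M w : Mok M -> Mok (ranking_step adj S y M w).
Proof.
move=> HM; rewrite /ranking_step.
case: ifP => // /andP [wS nmw].
case E: minpick => [c|] //.
have [cin _] := minpick_some E.
move: cin; rewrite mem_filter => /andP [/andP [/andP [cS awc] nmc] _].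
have cw : c != w by apply/eqP => E'; rewrite E' (negbTE (adj_irr w)) in awc.
have Hw : forall p, p \in M -> (p.1 != w) && (p.2 != w).
  move=> p pM; move: nmw; rewrite /matched => /hasPn /(_ p pM).
  by rewrite negb_or.
have Hc : forall p, p \in M -> (p.1 != c) && (p.2 != c).
  move=> p pM; move: nmc; rewrite /matched => /hasPn /(_ p pM).
  by rewrite negb_or.
move=> p q; rewrite !mem_rcons !inE => /orP Hp /orP Hq.
case: Hp => [/eqP -> | pM]; case: Hq => [/eqP -> | qM] /=.
- by [].
- by have /andP [+ _] := Hc q qM; rewrite eq_sym.
- by have /andP [_ +] := Hw p pM.
- exact: HM.
Qed.

Lemma Mok_rank (S : {set V}) (y : V -> R) : Mok (ranking adj dl S y).
Proof.
rewrite /ranking.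
have : Mok [::] by [].
elim: (deadline_order dl) [::] => //= a s IH M HM.
apply: IH; exact: Mok_step.
Qed.

End Main.

Section Main2.
Variable V : finType.
Variable adj : rel V.
Variable dl : V -> nat.
Hypothesis adj_sym : forall a b, adj a b = adj b a.
Hypothesis adj_irr : forall a, ~~ adj a a.
Variable side : V -> bool.
Hypothesis bip : forall a b, adj a b -> side a != side b.

Lemma passive_rm (y : V -> R) (r z : V) : side z != side r ->
  passive adj dl (setD [set: V] [set r]) y z -> passive adj dl [set: V] y z.
Proof.
move=> sz; rewrite /passive /ranking => H1.
have Hinit : Inv adj side (side r) (setD [set: V] [set r]) [set: V] [::] [::] [::].
  split; first by [].
  split; first by [].
  split; first by [].
  right; left; exists r.
  rewrite /bp /bl !inE /= eqxx; do ! split => //.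
  by move=> z' zr; rewrite !inE /= (negbTE zr).
have [p' [_ [_ [HP _]]]] := Inv_fold adj_sym adj_irr bip y (deadline_uniq dl) (fun w (_ : w \in deadline_order dl) => (isT : w \notin [::])) Hinit.
exact: HP z sz H1.
Qed.

Lemma alpha_pas (g : R -> R) (y : V -> R) w :
  pas (ranking adj dl [set: V] y) w -> alpha adj dl g y w = g (y w).
Proof.
rewrite /alpha => H.
have HM : Mok (ranking adj dl [set: V] y) by apply: Mok_rank.
move: H HM; set M := ranking adj dl [set: V] y => H HM.
case E1: [seq p <- M | p.1 == w] => [|p0 l].
- case E2: [seq p <- M | p.2 == w] => [|q l].
  + by move: H; rewrite /pas has_filter E2.
  + have : q \in [seq p <- M | p.2 == w] by rewrite E2 mem_head.
    by rewrite mem_filter => /andP [/eqP -> _].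
- have : p0 \in [seq p <- M | p.1 == w] by rewrite E1 mem_head.
  rewrite mem_filter => /andP [/eqP p0w p0M].
  move: H; rewrite /pas => /hasP [q qM /eqP qw].
  by have := HM q p0 qM p0M; rewrite qw p0w eqxx.
Qed.

Lemma marg_passive (S : {set V}) (y : V -> R) w th s :
  is_marginal_rank adj dl S y w th -> (0 <= s)%R -> (s < th)%R ->
  passive adj dl S (upd y w s) w.
Proof.
case => [[Hth [[eps [Heps Hb]] _]] | [Hth _]] Hs0 Hs; last lra.
case: (Rlt_dec (th - eps) s) => Hs1.
- exact: Hb.
- apply: (passive_mono (t := Rminus th (Rdiv eps 2))); first lra.
  apply: Hb; lra.
Qed.

Lemma point_u (g : R -> R) (y : V -> R) u v tau yu yv :
  adj u v -> is_marginal_rank adj dl (setD [set: V] [set v]) y u tau ->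
  (0 <= yu)%R -> (yu < tau)%R ->
  alpha adj dl g (upd (upd y u yu) v yv) u = g yu.
Proof.
move=> auv Hm H0 Hlt.
have uv : u != v by apply/eqP => E; rewrite E (negbTE (adj_irr v)) in auv.
have P1 := marg_passive Hm H0 Hlt.
have P1' : passive adj dl (setD [set: V] [set v]) (upd (upd y u yu) v yv) u.
  rewrite /passive (@ranking_ext _ adj dl _ _ (upd y u yu)) //.
  move=> z; rewrite !inE andbT => zv; by rewrite /upd (negbTE zv).
have P2 := passive_rm (bip auv) P1'.
by rewrite alpha_pas // /upd (negbTE uv) eqxx.
Qed.

Lemma point_v (g : R -> R) (y : V -> R) u v gam yu yv :
  adj u v -> is_marginal_rank adj dl (setD [set: V] [set u]) y v gam ->
  (0 <= yv)%R -> (yv < gam)%R ->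
  alpha adj dl g (upd (upd y u yu) v yv) v = g yv.
Proof.
move=> auv Hm H0 Hlt.
have uv : u != v by apply/eqP => E; rewrite E (negbTE (adj_irr v)) in auv.
have P1 := marg_passive Hm H0 Hlt.
have P1' : passive adj dl (setD [set: V] [set u]) (upd (upd y u yu) v yv) v.
  rewrite /passive (@ranking_ext _ adj dl _ _ (upd y v yv)) //.
  move=> z; rewrite !inE andbT => zu; rewrite /upd (negbTE zu).
  by case: (z == v).
have svu : side v != side u by rewrite eq_sym; exact: bip auv.
have P2 := passive_rm svu P1'.
by rewrite alpha_pas // /upd eqxx.
Qed.

End Main2.

Theorem lemma4p2 (V : finType) (adj : rel V) (arr dl : V -> nat)
  (g : R -> R) (y : V -> R) (u v : V) (tau gamma : R) :
  valid_instance adj arr dl ->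
  bipartite adj ->
  (forall a b, (0 <= a)%R -> (a <= b)%R -> (b <= 1)%R -> (g a <= g b)%R) ->
  (forall a, (0 <= a <= 1)%R -> (0 <= g a <= 1)%R) ->
  g 1%R = 1%R ->
  adj u v -> (dl u < dl v)%N ->
  (forall x, x != u -> x != v -> (0 <= y x < 1)%R) ->
  is_marginal_rank adj dl (setD [set: V] [set v]) y u tau ->
  is_marginal_rank adj dl (setD [set: V] [set u]) y v gamma ->
  let f := fun yu yv : R =>
    let y' := upd (upd y u yu) v yv in
    (alpha adj dl g y' u * indic (Rltb yu tau)
     + alpha adj dl g y' v * indic (Rltb yv gamma))%R in
  exists (F : R -> R) (I1 I2 : R),
    (forall yv, (0 <= yv <= 1)%R -> has_RInt (fun yu => f yu yv) 0 1 (F yv)) /\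
    has_RInt g 0 tau I1 /\ has_RInt g 0 gamma I2 /\
    has_RInt F 0 1 (I1 + I2)%R.
Proof.
move=> Hvalid Hbip Hmono Hg01 Hg1 auv dluv Hy Htau Hgam f.
have [adj_sym [adj_irr _]] := Hvalid.
have [side bip] := Hbip.
have tau01 : (0 <= tau <= 1)%R by case: Htau => [[[? ?] _]|[-> _]]; lra.
have gam01 : (0 <= gamma <= 1)%R by case: Hgam => [[[? ?] _]|[-> _]]; lra.
apply: (Integ.final_int g tau gamma f tau01 gam01 Hmono).
move=> yu yv Hyu Hyv. rewrite /f /= /indic /Rltb.
case: (Rlt_dec yu tau) => H1; case: (Rlt_dec yv gamma) => H2 /=.
- rewrite (point_u adj_sym adj_irr bip g yv auv Htau Hyu H1).
  rewrite (point_v adj_sym adj_irr bip g yu auv Hgam Hyv H2). ring.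
- rewrite (point_u adj_sym adj_irr bip g yv auv Htau Hyu H1). ring.
- rewrite (point_v adj_sym adj_irr bip g yu auv Hgam Hyv H2). ring.
- ring.
Qed.
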